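(* Under the hypotheses of the PC key inequality (with $\beta>0$, $\boldsymbol{H}_k=\boldsymbol{Q}_k\boldsymbol{M}_k^{-1}$ symmetric positive definite, $\boldsymbol{G}_k=\boldsymbol{Q}_k^T+\boldsymbol{Q}_k-\beta\boldsymbol{M}_k^T\boldsymbol{H}_k\boldsymbol{M}_k\succ0$, and $\boldsymbol{w}^{k+1}=\boldsymbol{w}^k-\beta\boldsymbol{M}_k(\boldsymbol{w}^k-\tilde{\boldsymbol{w}}^k)$), for every $\boldsymbol{w}^*\in\Omega^*$, $$\|\boldsymbol{w}^*-\boldsymbol{w}^{k+1}\|_{\boldsymbol{H}_k}^2\le\|\boldsymbol{w}^*-\boldsymbol{w}^k\|_{\boldsymbol{H}_k}^2-\beta\|\boldsymbol{w}^k-\tilde{\boldsymbol{w}}^k\|_{\boldsymbol{G}_k}^2.$$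
   Context: $\mathcal{X}\subset\mathbb{R}^n$ nonempty closed convex; $f$ convex; $\phi_1,\dots,\phi_m$ convex, continuously differentiable; $\Phi=(\phi_1,\dots,\phi_m)^T$ with $m\times n$ Jacobian $\mathcal{D}\Phi$; $\Omega=\mathcal{X}\times\mathbb{R}^m_+$; $\boldsymbol{\Gamma}(\boldsymbol{w})=(\mathcal{D}\Phi(\boldsymbol{x})^T\boldsymbol{\lambda},-\Phi(\boldsymbol{x}))$; $\Omega^*$ is the set of $\boldsymbol{w}^*=(\boldsymbol{x}^*,\boldsymbol{\lambda}^* )\in\Omega$ with $f(\boldsymbol{x})-f(\boldsymbol{x}^* )+(\boldsymbol{w}-\boldsymbol{w}^* )^T\boldsymbol{\Gamma}(\boldsymbol{w}^* )\ge0$ for all $\boldsymbol{w}\in\Omega$. $\boldsymbol{Q}_k=\begin{pmatrix} r_k\boldsymbol{I}_n & -\mathcal{D}\Phi(\tilde{\boldsymbol{x}}^k)^T\\ \boldsymbol{0} & s_k\boldsymbol{I}_m\end{pmatrix}$ ($r_k,s_k>0$), $\boldsymbol{M}_k$ invertible, and $\tilde{\boldsymbol{w}}^k\in\Omega$ satisfies $f(\boldsymbol{x})-f(\tilde{\boldsymbol{x}}^k)+(\boldsymbol{w}-\tilde{\boldsymbol{w}}^k)^T\boldsymbol{\Gamma}(\tilde{\boldsymbol{w}}^k)\ge(\boldsymbol{w}-\tilde{\boldsymbol{w}}^k)^T\boldsymbol{Q}_k(\boldsymbol{w}^k-\tilde{\boldsymbol{w}}^k)$ for all $\boldsymbol{w}\in\Omega$.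 $\|\boldsymbol{v}\|_{\boldsymbol{H}}^2=\boldsymbol{v}^T\boldsymbol{H}\boldsymbol{v}$. *)

(* Defs.v *)
From HB Require Import structures.
From mathcomp Require Import all_boot all_order all_algebra.
From mathcomp Require Import all_classical all_reals all_analysis.
Set Implicit Arguments. Unset Strict Implicit. Unset Printing Implicit Defensive.
Import Order.TTheory GRing.Theory Num.Theory.
Import numFieldNormedType.Exports.
Local Open Scope classical_set_scope.
Local Open Scope ring_scope.

(* Vectors of R^n are represented as row vectors 'rV[R]_n; a column-vector
   expression v^T A u of the paper is (v *m A *m u^T) 0 0 here. *)

Definition bilf (R : ringType) (p : nat) (u : 'rV[R]_p) (A : 'M[R]_p) (v : 'rV[R]_p) : R :=
  (u *m A *m v^T) ord0 ord0.

Definition qf (R : ringType) (p : nat) (H : 'M[R]_p) (v : 'rV[R]_p) : R := bilf v H v.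

Definition dotv (R : ringType) (p : nat) (u v : 'rV[R]_p) : R := (u *m v^T) ord0 ord0.

Definition posdef (R : numDomainType) (p : nat) (A : 'M[R]_p) : Prop :=
  forall v : 'rV[R]_p, v != 0 -> 0 < qf A v.

(* Jacobian D Phi(x) as an m x n matrix (the library's jacobian is its
   transpose, acting on row vectors: 'D_v Phi x = v *m jacobian Phi x). *)
Definition DPhi (R : realType) (n m : nat) (Phi : 'rV[R]_n -> 'rV[R]_m) (x : 'rV[R]_n)
  : 'M[R]_(m, n) := (jacobian Phi x)^T.

Definition pairw (R : ringType) (n m : nat) (x : 'rV[R]_n) (l : 'rV[R]_m) : 'rV[R]_(n + m) :=
  row_mx x l.

Definition Gam (R : realType) (n m : nat) (Phi : 'rV[R]_n -> 'rV[R]_m)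
  (x : 'rV[R]_n) (l : 'rV[R]_m) : 'rV[R]_(n + m) :=
  row_mx (l *m DPhi Phi x) (- Phi x).

Definition Omega (R : realType) (n m : nat) (X : set 'rV[R]_n)
  (x : 'rV[R]_n) (l : 'rV[R]_m) : Prop :=
  X x /\ forall i, 0 <= l ord0 i.

Definition OmegaStar (R : realType) (n m : nat) (X : set 'rV[R]_n) (f : 'rV[R]_n -> R)
  (Phi : 'rV[R]_n -> 'rV[R]_m) (xs : 'rV[R]_n) (ls : 'rV[R]_m) : Prop :=
  Omega X xs ls /\
  forall (x : 'rV[R]_n) (l : 'rV[R]_m), Omega X x l ->
    0 <= f x - f xs + dotv (pairw x l - pairw xs ls) (Gam Phi xs ls).

Definition Qmat (R : realType) (n m : nat) (Phi : 'rV[R]_n -> 'rV[R]_m)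
  (r s : R) (xt : 'rV[R]_n) : 'M[R]_(n + m) :=
  block_mx (r%:M) (- (DPhi Phi xt)^T) 0 (s%:M).

Definition convexf (R : realType) (n : nat) (g : 'rV[R]_n -> R) : Prop :=
  forall (x y : 'rV[R]_n) (t : R), 0 <= t <= 1 ->
    g (t *: x + (1 - t) *: y) <= t * g x + (1 - t) * g y.

Definition convexs (R : realType) (n : nat) (X : set 'rV[R]_n) : Prop :=
  forall (x y : 'rV[R]_n) (t : R), 0 <= t <= 1 -> X x -> X y ->
    X (t *: x + (1 - t) *: y).

(* Main.v *)
Require Import Defs.
From HB Require Import structures.
From mathcomp Require Import all_boot all_order all_algebra.
From mathcomp Require Import all_classical all_reals all_analysis.
From mathcomp Require Import lra.
Import Order.TTheory GRing.Theory Num.Theory.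
Import numFieldNormedType.Exports.
Local Open Scope classical_set_scope.
Local Open Scope ring_scope.

Lemma grad_le (R : realType) n m (g : 'rV[R]_n -> 'rV[R]_m) (x y : 'rV[R]_n) (i : 'I_m) :
  convexf (fun z => g z ord0 i) -> differentiable g x ->
  ((y - x) *m jacobian g x) ord0 i <= g y ord0 i - g x ord0 i.
Proof.
move=> cv dg.
rewrite -deriveEjacobian //.
have dv : derivable g x (y - x) by apply: diff_derivable.
pose F := fun h : R => (h^-1 *: ((g \o shift x) (h *: (y - x)) - g x)) ord0 i.
have cF : F h @[h --> 0^'] --> ('D_(y - x) g x) ord0 i.
  apply: (continuous_cvg _ (@coord_continuous R 1 m ord0 i _)).
  exact: dv.
have cF' : F h @[h --> 0^'+] --> ('D_(y - x) g x) ord0 i.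
  move=> A /cF; rewrite /= !near_simpl /= !near_withinE.
  apply: filterS => z Hz zp; apply: Hz; exact: lt0r_neq0.
rewrite -(cvg_lim _ cF') //.
apply: limr_le; first by apply/cvg_ex; eexists; exact: cF'.
near=> h.
have h0 : 0 < h by near: h; exact: nbhs_right_gt.
have h1 : h <= 1 by near: h; apply: nbhs_right_le; exact: ltr01.
have := cv y x h; rewrite h1 (ltW h0) => /(_ isT).
rewrite /F /= !mxE.
have -> : h *: y + (1 - h) *: x = h *: (y - x) + x.
  by rewrite scalerBl scale1r scalerBr addrCA addrC.
move=> H.
rewrite ler_pdivrMl //. nra.
Unshelve. all: by end_near.
Qed.

Section Aux.
Variable R : realType.

Lemma bilfDl p (u v w : 'rV[R]_p) A : bilf (u + v) A w = bilf u A w + bilf v A w.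
Proof. by rewrite /bilf !mulmxDl mxE. Qed.
Lemma bilfNl p (u w : 'rV[R]_p) A : bilf (- u) A w = - bilf u A w.
Proof. by rewrite /bilf !mulNmx mxE. Qed.
Lemma bilfBl p (u v w : 'rV[R]_p) A : bilf (u - v) A w = bilf u A w - bilf v A w.
Proof. by rewrite bilfDl bilfNl. Qed.
Lemma bilfZl p (u w : 'rV[R]_p) A c : bilf (c *: u) A w = c * bilf u A w.
Proof. by rewrite /bilf -!scalemxAl mxE. Qed.
Lemma bilfDr p (u v w : 'rV[R]_p) A : bilf w A (u + v) = bilf w A u + bilf w A v.
Proof. by rewrite /bilf linearD /= mulmxDr mxE. Qed.
Lemma bilfNr p (u w : 'rV[R]_p) A : bilf w A (- u) = - bilf w A u.
Proof. by rewrite /bilf linearN /= mulmxN mxE. Qed.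
Lemma bilfBr p (u v w : 'rV[R]_p) A : bilf w A (u - v) = bilf w A u - bilf w A v.
Proof. by rewrite bilfDr bilfNr. Qed.
Lemma bilfZr p (u w : 'rV[R]_p) A c : bilf w A (c *: u) = c * bilf w A u.
Proof. by rewrite /bilf linearZ /= -scalemxAr mxE. Qed.
Lemma bilfDm p (u w : 'rV[R]_p) A B : bilf u (A + B) w = bilf u A w + bilf u B w.
Proof. by rewrite /bilf mulmxDr mulmxDl mxE. Qed.
Lemma bilfBm p (u w : 'rV[R]_p) A B : bilf u (A - B) w = bilf u A w - bilf u B w.
Proof. by rewrite bilfDm /bilf mulmxN mulNmx [X in _ + X]mxE. Qed.
Lemma bilfZm p (u w : 'rV[R]_p) A c : bilf u (c *: A) w = c * bilf u A w.
Proof. by rewrite /bilf -scalemxAr -scalemxAl mxE. Qed.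
Lemma bilf_tr p (u w : 'rV[R]_p) A : bilf u A^T w = bilf w A u.
Proof.
have h : u *m A^T *m w^T = (w *m A *m u^T)^T by rewrite !trmx_mul trmxK mulmxA.
by rewrite /bilf h mxE.
Qed.
Lemma bilf_mulr p (u : 'rV[R]_p) (v : 'rV[R]_p) A (B : 'M[R]_p) :
  bilf u A (v *m B^T) = bilf u (A *m B) v.
Proof. by rewrite /bilf trmx_mul trmxK !mulmxA. Qed.
Lemma bilf_mull p (u : 'rV[R]_p) (v : 'rV[R]_p) A (B : 'M[R]_p) :
  bilf (u *m B) A v = bilf u (B *m A) v.
Proof. by rewrite /bilf !mulmxA. Qed.

Lemma dotv_row n m (a c : 'rV[R]_n) (b d : 'rV[R]_m) :
  dotv (row_mx a b) (row_mx c d) = dotv a c + dotv b d.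
Proof. by rewrite /dotv tr_row_mx mul_row_col mxE. Qed.
Lemma pairwB n m (x x' : 'rV[R]_n) (l l' : 'rV[R]_m) :
  pairw x l - pairw x' l' = pairw (x - x') (l - l').
Proof. by rewrite /pairw opp_row_mx add_row_mx. Qed.
Lemma dotv_sum p (u v : 'rV[R]_p) : dotv u v = \sum_j u ord0 j * v ord0 j.
Proof. by rewrite /dotv mxE; apply: eq_bigr => j _; rewrite mxE. Qed.
Lemma dotv_mulJ n m (u : 'rV[R]_n) (l : 'rV[R]_m) (A : 'M[R]_(n, m)) :
  dotv u (l *m A^T) = dotv (u *m A) l.
Proof. by rewrite /dotv trmx_mul trmxK mulmxA. Qed.
End Aux.

Lemma mono_aux (R : realType) m (p1 p2 lt ls Pt Ps : 'rV[R]_m) :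
  (forall i, 0 <= lt ord0 i) -> (forall i, 0 <= ls ord0 i) ->
  (forall i, p1 ord0 i <= Ps ord0 i - Pt ord0 i) ->
  (forall i, p2 ord0 i <= Pt ord0 i - Ps ord0 i) ->
  dotv p1 lt + dotv (ls - lt) (- Pt) + (dotv p2 ls + dotv (lt - ls) (- Ps)) <= 0.
Proof.
move=> hlt hls g1 g2.
rewrite !dotv_sum -!big_split /= -oppr_ge0 -sumrN; apply: sumr_ge0 => i _.
rewrite !mxE.
have := hlt i; have := hls i; have := g1 i; have := g2 i. nra.
Qed.

Lemma mono (R : realType) n m (Phi : 'rV[R]_n -> 'rV[R]_m)
  (hPhic : forall i : 'I_m, convexf (fun x => Phi x ord0 i))
  (hPhid : forall x, differentiable Phi x) (xt xs : 'rV[R]_n) (lt ls : 'rV[R]_m) :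
  (forall i, 0 <= lt ord0 i) -> (forall i, 0 <= ls ord0 i) ->
  dotv (pairw xs ls - pairw xt lt) (Gam Phi xt lt)
  + dotv (pairw xt lt - pairw xs ls) (Gam Phi xs ls) <= 0.
Proof.
move=> hlt hls.
rewrite !pairwB /Gam !dotv_row /DPhi !dotv_mulJ.
apply: mono_aux => // i.
- exact: grad_le (hPhic i) (hPhid xt).
- exact: grad_le (hPhic i) (hPhid xs).
Qed.

Theorem theorem4 (R : realType) (n m : nat)
  (X : set 'rV[R]_n) (f : 'rV[R]_n -> R) (Phi : 'rV[R]_n -> 'rV[R]_m)
  (hXne : X !=set0) (hXcl : closed X) (hXcv : convexs X)
  (hf : convexf f)
  (hPhic : forall i : 'I_m, convexf (fun x => Phi x ord0 i))
  (hPhid : forall x, differentiable Phi x)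
  (hPhiC1 : continuous (fun x => jacobian Phi x))
  (r s beta : R) (M : 'M[R]_(n + m))
  (xk xt : 'rV[R]_n) (lk lt : 'rV[R]_m) (w1 : 'rV[R]_(n + m))
  (hr : 0 < r) (hs : 0 < s) (hM : M \in unitmx)
  (hOt : Omega X xt lt)
  (hVI : forall (x : 'rV[R]_n) (l : 'rV[R]_m), Omega X x l ->
     f x - f xt + dotv (pairw x l - pairw xt lt) (Gam Phi xt lt)
       >= bilf (pairw x l - pairw xt lt) (Qmat Phi r s xt) (pairw xk lk - pairw xt lt))
  (hbeta : 0 < beta)
  (hHsym : (Qmat Phi r s xt *m invmx M)^T = Qmat Phi r s xt *m invmx M)
  (hHpd : posdef (Qmat Phi r s xt *m invmx M))
  (hGpd : posdef ((Qmat Phi r s xt)^T + Qmat Phi r s xt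
                   - beta *: (M^T *m (Qmat Phi r s xt *m invmx M) *m M)))
  (hw1 : w1 = pairw xk lk - beta *: (M *m (pairw xk lk - pairw xt lt)^T)^T) :
  forall (xs : 'rV[R]_n) (ls : 'rV[R]_m), OmegaStar X f Phi xs ls ->
    qf (Qmat Phi r s xt *m invmx M) (pairw xs ls - w1)
      <= qf (Qmat Phi r s xt *m invmx M) (pairw xs ls - pairw xk lk)
         - beta * qf ((Qmat Phi r s xt)^T + Qmat Phi r s xt
                   - beta *: (M^T *m (Qmat Phi r s xt *m invmx M) *m M))
                 (pairw xk lk - pairw xt lt).
Proof.
move=> xs ls [[hXs hls] hstar].
have hlt := hOt.2.
have hVs := hVI xs ls (conj hXs hls).
have hst := hstar xt lt hOt.
have hmo := @mono _ _ _ Phi hPhic hPhid xt xs lt ls hlt hls.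
set Q := Qmat Phi r s xt in hVs hHsym hHpd hGpd *.
set H := Q *m invmx M in hHsym hHpd hGpd *.
set ws := pairw xs ls in hVs hst hmo *.
set wk := pairw xk lk in hVs hw1 *.
set wt := pairw xt lt in hVs hst hmo hw1 *.
set d := wk - wt in hVs hw1 *.
have hY : bilf (ws - wt) Q d <= 0 by lra.
set e := d *m M^T.
have hw1' : ws - w1 = (ws - wk) + beta *: e.
  by rewrite hw1 trmx_mul trmxK -/d -/e opprB addrCA addrC.
have HM : H *m M = Q by rewrite /H mulmxKV.
have eHe : bilf e H (ws - wk) = bilf (ws - wk) H e.
  by rewrite -{1}hHsym bilf_tr.
have aHe : bilf (ws - wk) H e = bilf (ws - wt) Q d - bilf d Q d.
  rewrite /e -[M in d *m M^T]trmxK bilf_mulr trmxK HM.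
  by rewrite (_ : ws - wk = (ws - wt) - d) ?bilfBl // /d opprB addrA subrK.
have eHe2 : bilf e H e = bilf d (M^T *m H *m M) d.
  by rewrite /e bilf_mull bilf_mulr.
set a := ws - wk in hw1' eHe aHe *.
clearbody a e. clearbody d.
rewrite /qf hw1' bilfDl !bilfDr !bilfZl !bilfZr eHe aHe eHe2.
rewrite bilfBm bilfDm bilfZm bilf_tr.
move: hY hbeta.
set Y := bilf (ws - wt) Q d.
set Z := bilf d Q d.
set W := bilf d (M^T *m H *m M) d.
move=> hY hb. nra.
Qed.
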